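(* Let $\mathbb{X}$ be a real or complex Banach space with norm $|\cdot|$, let $k\ge 1$ be an integer, and let $f_n:\mathbb{X}^{k+1}\to\mathbb{X}$, $n=0,1,2,\dots$, be functions. Assume there is a real number $\alpha\in(0,1)$ such that for every $n$ and all $(\xi_0,\xi_1,\dots,\xi_k)\in\mathbb{X}^{k+1}$, $$|f_n(\xi_0,\xi_1,\dots,\xi_k)|\le \alpha\max\{|\xi_0|,\dots,|\xi_k|\}.$$ Then every solution $\{x_n\}$ of the difference equation $x_{n+1}=f_n(x_n,x_{n-1},\dots,x_{n-k})$, $n\ge 0$, with initial values $x_0,x_{-1},\dots,x_{-k}\in\mathbb{X}$ satisfies, for all $n\ge 1$, $$|x_n|\le \alpha^{n/(k+1)}\max\{|x_0|,|x_{-1}|,\dots,|x_{-k}|\}.$$ In particular, the origin is globally exponentially stable.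
   Context: A solution of $x_{n+1}=f_n(x_n,\dots,x_{n-k})$ is the sequence $\{x_n\}_{n\ge -k}$ generated by iteration from given initial values $x_0,x_{-1},\dots,x_{-k}$. The origin is called globally exponentially stable if every solution satisfies $|x_n|\le c^n\mu$ for all $n$, where $c\in(0,1)$ and $\mu>0$ are real constants and $c$ does not depend on the initial values. *)

(* Defs.v *)
From Stdlib Require Import Reals ZArith.
From mathcomp Require Import ssreflect ssrfun ssrbool eqtype ssrnat seq fintype bigop.
Set Implicit Arguments.
Unset Strict Implicit.

Open Scope R_scope.

(* A complex Banach space is in particular a real Banach space with
   the same norm, so this covers both cases of the paper. *)
Record BanachSpace := {
  carrier :> Type;
  vzero : carrier;
  vadd : carrier -> carrier -> carrier;
  vopp : carrier -> carrier;
  vscal : R -> carrier -> carrier;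
  vnorm : carrier -> R;
  vadd_assoc : forall u v w, vadd u (vadd v w) = vadd (vadd u v) w;
  vadd_comm : forall u v, vadd u v = vadd v u;
  vadd_0 : forall u, vadd u vzero = u;
  vadd_opp : forall u, vadd u (vopp u) = vzero;
  vscal_1 : forall u, vscal 1 u = u;
  vscal_assoc : forall a b u, vscal a (vscal b u) = vscal (a * b) u;
  vscal_distr_l : forall a u v, vscal a (vadd u v) = vadd (vscal a u) (vscal a v);
  vscal_distr_r : forall a b u, vscal (a + b) u = vadd (vscal a u) (vscal b u);
  vnorm_nonneg : forall u, 0 <= vnorm u;
  vnorm_eq0 : forall u, vnorm u = 0 -> u = vzero;
  vnorm_scal : forall a u, vnorm (vscal a u) = Rabs a * vnorm u;
  vnorm_triangle : forall u v, vnorm (vadd u v) <= vnorm u + vnorm v;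
  vcomplete : forall s : nat -> carrier,
    (forall eps, eps > 0 -> exists N, forall m n, (N <= m)%nat -> (N <= n)%nat ->
        vnorm (vadd (s m) (vopp (s n))) < eps) ->
    exists l, forall eps, eps > 0 -> exists N, forall n, (N <= n)%nat ->
        vnorm (vadd (s n) (vopp l)) < eps
}.

(* max{ g 0, ..., g k } for nonnegative g (0 is neutral on nonnegatives). *)
Definition maxk (k : nat) (g : 'I_k.+1 -> R) : R := \big[Rmax/0]_(i < k.+1) g i.

Definition is_solution (X : BanachSpace) (k : nat)
    (f : nat -> ('I_k.+1 -> X) -> X) (x : Z -> X) : Prop :=
  forall n : nat,
    x (Z.of_nat n + 1)%Z = f n (fun i : 'I_k.+1 => x (Z.of_nat n - Z.of_nat i)%Z).

Definition glob_exp_stable (X : BanachSpace) (k : nat)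
    (f : nat -> ('I_k.+1 -> X) -> X) : Prop :=
  exists c : R, 0 < c < 1 /\
    forall x : Z -> X, is_solution f x ->
      exists mu : R, mu > 0 /\
        forall n : Z, (- Z.of_nat k <= n)%Z -> vnorm (x n) <= powerRZ c n * mu.

(* Main.v *)
Require Import Defs.
From Stdlib Require Import Reals ZArith Lra Lia.
From mathcomp Require Import ssreflect ssrfun ssrbool eqtype ssrnat seq fintype bigop.
Open Scope R_scope.

Lemma Rpow_anti a y1 y2 : 0 < a < 1 -> y1 <= y2 -> Rpower a y2 <= Rpower a y1.
Proof.
  intros Ha Hy. unfold Rpower.
  assert (Hl : ln a < 0) by (rewrite <- ln_1; apply ln_increasing; lra).
  destruct (Rle_lt_or_eq_dec _ _ Hy) as [H|H].
  - left. apply exp_increasing. nra.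
  - subst. lra.
Qed.

Lemma maxk_ge k (g : 'I_k.+1 -> R) i : g i <= maxk g.
Proof.
  unfold maxk. have: i \in index_enum 'I_k.+1 := mem_index_enum i.
  elim: (index_enum _) => [|a r IH] //. rewrite in_cons big_cons => /orP [/eqP ->|Hi].
  - apply Rmax_l.
  - eapply Rle_trans; [apply IH; exact Hi| apply Rmax_r].
Qed.

Lemma maxk_le k (g : 'I_k.+1 -> R) B : 0 <= B -> (forall i, g i <= B) -> maxk g <= B.
Proof.
  intros HB HF. unfold maxk. elim: (index_enum _) => [|a r IH]; first by rewrite big_nil.
  rewrite big_cons. apply Rmax_lub; auto.
Qed.

Lemma maxk_nonneg k (g : 'I_k.+1 -> R) : 0 <= maxk g.
Proof.
  unfold maxk. elim: (index_enum _) => [|a r IH]; first by rewrite big_nil; lra.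
  rewrite big_cons. eapply Rle_trans; [exact IH| apply Rmax_r].
Qed.

Lemma main_bound (X : BanachSpace) (k : nat)
  (f : nat -> ('I_k.+1 -> X) -> X) (alpha : R) (ha : 0 < alpha < 1)
  (hf : forall (n : nat) (xi : 'I_k.+1 -> X),
          vnorm (f n xi) <= alpha * maxk (fun i => vnorm (xi i)))
  (x : Z -> X) (hx : is_solution f x) :
  forall N : nat, forall n : Z, (- Z.of_nat k <= n <= Z.of_nat N)%Z ->
    vnorm (x n) <= Rpower alpha (IZR n / INR k.+1)
      * maxk (fun i : 'I_k.+1 => vnorm (x (- Z.of_nat i)%Z)).
Proof.
  set M := maxk _.
  assert (HM : 0 <= M) by apply maxk_nonneg.
  assert (Hk : 0 < INR k.+1) by (apply lt_0_INR; lia).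
  elim => [|N IH] n Hn.
  - assert (Hi : (Z.to_nat (- n) < k.+1)%coq_nat) by lia.
    set i := Ordinal (introT ltP Hi).
    have Hxn : n = (- Z.of_nat i)%Z by rewrite /i /=; lia.
    have H1 : vnorm (x n) <= M.
    { rewrite Hxn. exact: maxk_ge. }
    have H2 : 1 <= Rpower alpha (IZR n / INR k.+1).
    { rewrite <- (Rpower_O alpha) at 1; [|lra]. apply Rpow_anti; auto.
      have : IZR n <= 0 by apply IZR_le; lia.
      intros. unfold Rdiv. have : 0 < / INR k.+1 by apply Rinv_0_lt_compat. nra. }
    nra.
  - destruct (Z.le_gt_cases n (Z.of_nat N)) as [Hle|Hgt].
    + apply IH; lia.
    + have -> : n = (Z.of_nat N + 1)%Z by lia.
      rewrite hx. eapply Rle_trans; [apply hf|].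
      have Hb : maxk (fun i : 'I_k.+1 => vnorm (x (Z.of_nat N - Z.of_nat i)%Z))
                <= Rpower alpha ((IZR (Z.of_nat N) - INR k) / INR k.+1) * M.
      { apply maxk_le.
        - apply Rmult_le_pos; auto. unfold Rpower; left; apply exp_pos.
        - intros i. eapply Rle_trans; [apply IH|].
          + have := ltn_ord i. move/ltP. lia.
          + apply Rmult_le_compat_r; auto. apply Rpow_anti; auto.
            unfold Rdiv. apply Rmult_le_compat_r; [left; apply Rinv_0_lt_compat; auto|].
            rewrite minus_IZR -!INR_IZR_INZ. apply Rplus_le_compat_l, Ropp_le_contravar.
            apply le_INR. have := ltn_ord i. move/ltP. lia. }
      have Heq : Rpower alpha (IZR (Z.of_nat N + 1) / INR k.+1)
         = alpha * Rpower alpha ((IZR (Z.of_nat N) - INR k) / INR k.+1).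
      { rewrite <- (Rpower_1 alpha) at 2; [|lra]. rewrite <- Rpower_plus. f_equal.
        rewrite plus_IZR S_INR. field. have := pos_INR k. lra. }
      rewrite Heq. rewrite Rmult_assoc. apply Rmult_le_compat_l; lra.
Qed.

Lemma zh n k : (- Z.of_nat k <= n)%Z -> (- Z.of_nat k <= n <= Z.of_nat (Z.abs_nat n))%Z.
Proof. intros; lia. Qed.

Theorem lemma1 (X : BanachSpace) (k : nat) (hk : (1 <= k)%nat)
  (f : nat -> ('I_k.+1 -> X) -> X) (alpha : R) (ha : 0 < alpha < 1)
  (hf : forall (n : nat) (xi : 'I_k.+1 -> X),
          vnorm (f n xi) <= alpha * maxk (fun i => vnorm (xi i))) :
  (forall x : Z -> X, is_solution f x ->
     forall n : nat, (1 <= n)%nat ->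
       vnorm (x (Z.of_nat n)) <=
         Rpower alpha (INR n / INR (k + 1))
         * maxk (fun i : 'I_k.+1 => vnorm (x (- Z.of_nat i)%Z)))
  /\ glob_exp_stable f.
Proof.
  split.
  - intros x hx n _. rewrite addn1 INR_IZR_INZ.
    apply (@main_bound X k f alpha ha hf x hx n). lia.
  - assert (Hk : 0 < INR k.+1) by (apply lt_0_INR; lia).
    assert (Hl : ln alpha < 0) by (rewrite <- ln_1; apply ln_increasing; lra).
    exists (Rpower alpha (/ INR k.+1)). split.
    + split; [unfold Rpower; apply exp_pos|].
      rewrite <- (Rpower_O alpha); [|lra]. unfold Rpower. apply exp_increasing.
      have : 0 < / INR k.+1 by apply Rinv_0_lt_compat. nra.
    + intros x hx. set M := maxk (fun i : 'I_k.+1 => vnorm (x (- Z.of_nat i)%Z)).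
      assert (HM : 0 <= M) by apply maxk_nonneg.
      exists (M + 1). split; [lra|]. intros n Hn.
      rewrite powerRZ_Rpower; [|unfold Rpower; apply exp_pos].
      rewrite Rpower_mult.
      have -> : / INR k.+1 * IZR n = IZR n / INR k.+1 by unfold Rdiv; ring.
      eapply Rle_trans; [apply (@main_bound X k f alpha ha hf x hx (Z.abs_nat n)); exact: zh|].
      apply Rmult_le_compat_l; [unfold Rpower; left; apply exp_pos|]. rewrite /M; lra.
Qed.
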